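(* Let $k$ be a commutative ring with set of maximal ideals $M$, and let $K_\alpha$, $\pi_{\alpha\beta}$, $K$ be as in the context, with canonical projections $\pi_\alpha:K\to K_\alpha$. Then the homomorphism \[ \Phi:\mathrm{Pic}(K)\to\varprojlim\bigl(\mathrm{Pic}(K_\alpha),\mathrm{Pic}(\pi_{\alpha\beta})\bigr) \] induced by the maps $\mathrm{Pic}(\pi_\alpha)$ is injective.
   Context: Let $\{M_\alpha\}_{\alpha\in I}$ be finite subsets of $M$ with $\bigcup_\alpha M_\alpha=M$ that are linearly ordered by inclusion. For $M_\alpha=\{\mathfrak m_1,\dots,\mathfrak m_n\}$ put $K_\alpha=k_{\mathfrak m_1}\oplus\cdots\oplus k_{\mathfrak m_n}$ (direct product of localizations); for $M_\alpha\subseteq M_\beta$ let $\pi_{\alpha\beta}:K_\beta\to K_\alpha$ be the canonical projection, and $K=\varprojlim(K_\alpha,\pi_{\alpha\beta})$. $\mathrm{Pic}$ denotes the Picard group. *)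

(* Defs.v *)
From HB Require Import structures.
From mathcomp Require Import all_boot all_order all_algebra.
From mathcomp Require Import boolp classical_sets cardinality.
From mathcomp Require Import mxtens.

Set Implicit Arguments.
Unset Strict Implicit.
Unset Printing Implicit Defensive.

Import GRing.Theory.
Local Open Scope ring_scope.
Local Open Scope classical_set_scope.

Definition is_ideal (R : comPzRingType) (I : set R) : Prop :=
  I 0 /\ (forall x y, I x -> I y -> I (x + y)) /\
  (forall a x, I x -> I (a * x)).

Definition is_maximal_ideal (R : comPzRingType) (I : set R) : Prop :=
  [/\ is_ideal I, ~ I 1 &
      forall J : set R, is_ideal J -> I `<=` J -> J = I \/ J = setT].

Definition maxideal (R : comPzRingType) := {I : set R | is_maximal_ideal I}.

(* [f : R -> S] is (a) localization of R at the prime ideal P, i.e. at the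
   multiplicative set R \ P (characterization by the universal property,
   Atiyah--Macdonald Cor. 3.2): this determines S up to unique iso. *)
Definition is_localization (R S : comPzRingType) (P : set R)
    (f : {rmorphism R -> S}) : Prop :=
  [/\ forall s, ~ P s -> exists t, f s * t = 1,
      forall a, f a = 0 -> exists2 s, ~ P s & s * a = 0 &
      forall x, exists a s, ~ P s /\ x * f s = f a].

Section DProd.
Variables (I : Type) (R : I -> comPzRingType).

Record dprod := DProd { dpval : forall i, R i }.

HB.instance Definition _ := gen_eqMixin dprod.
HB.instance Definition _ := gen_choiceMixin dprod.

Lemma dprod_ext (x y : dprod) : (forall i, dpval x i = dpval y i) -> x = y.
Proof.
case: x; case: y => f g /= H.
by have -> : g = f by apply: functional_extensionality_dep.
Qed.

Definition dp_zero := DProd (fun i => 0).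
Definition dp_opp (x : dprod) := DProd (fun i => - dpval x i).
Definition dp_add (x y : dprod) := DProd (fun i => dpval x i + dpval y i).
Definition dp_one := DProd (fun i => 1).
Definition dp_mul (x y : dprod) := DProd (fun i => dpval x i * dpval y i).

Lemma dp_addA : associative dp_add.
Proof. by move=> x y z; apply: dprod_ext => i /=; rewrite addrA. Qed.
Lemma dp_addC : commutative dp_add.
Proof. by move=> x y; apply: dprod_ext => i /=; rewrite addrC. Qed.
Lemma dp_add0 : left_id dp_zero dp_add.
Proof. by move=> x; apply: dprod_ext => i /=; rewrite add0r. Qed.
Lemma dp_addN : left_inverse dp_zero dp_opp dp_add.
Proof. by move=> x; apply: dprod_ext => i /=; rewrite addNr. Qed.

HB.instance Definition _ :=
  GRing.isZmodule.Build dprod dp_addA dp_addC dp_add0 dp_addN.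

Lemma dp_mulA : associative dp_mul.
Proof. by move=> x y z; apply: dprod_ext => i /=; rewrite mulrA. Qed.
Lemma dp_mulC : commutative dp_mul.
Proof. by move=> x y; apply: dprod_ext => i /=; rewrite mulrC. Qed.
Lemma dp_mul1 : left_id dp_one dp_mul.
Proof. by move=> x; apply: dprod_ext => i /=; rewrite mul1r. Qed.
Lemma dp_mulDl : left_distributive dp_mul (@GRing.add dprod).
Proof. by move=> x y z; apply: dprod_ext => i /=; rewrite mulrDl. Qed.

HB.instance Definition _ :=
  GRing.Zmodule_isComPzRing.Build dprod dp_mulA dp_mulC dp_mul1 dp_mulDl.

End DProd.

Section Limit.
Variables (T : Type) (L : T -> comPzRingType) (J : Type) (Ms : J -> set T).

Definition Kal (a : J) : comPzRingType :=
  dprod (fun m : {x : T | Ms a x} => L (proj1_sig m)).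

Definition piab (a b : J) (h : Ms a `<=` Ms b) (x : Kal b) : Kal a :=
  DProd (fun m : {x : T | Ms a x} =>
    dpval x (exist (fun t => Ms b t) (proj1_sig m) (h _ (proj2_sig m)))).

Record Klim := KLim {
  klval : forall a, Kal a;
  klP : forall a b (h : Ms a `<=` Ms b), piab h (klval b) = klval a }.

HB.instance Definition _ := gen_eqMixin Klim.
HB.instance Definition _ := gen_choiceMixin Klim.

Lemma Klim_ext (x y : Klim) : (forall a, klval x a = klval y a) -> x = y.
Proof.
case: x => f fP; case: y => g gP /= H.
have E : f = g by apply: functional_extensionality_dep.
subst g; congr KLim; exact: Prop_irrelevance.
Qed.

Lemma piab_add a b (h : Ms a `<=` Ms b) (x y : Kal b) :
  piab h (x + y) = piab h x + piab h y.
Proof. by apply: dprod_ext. Qed.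
Lemma piab_opp a b (h : Ms a `<=` Ms b) (x : Kal b) :
  piab h (- x) = - piab h x.
Proof. by apply: dprod_ext. Qed.
Lemma piab_mul a b (h : Ms a `<=` Ms b) (x y : Kal b) :
  piab h (x * y) = piab h x * piab h y.
Proof. by apply: dprod_ext. Qed.
Lemma piab0 a b (h : Ms a `<=` Ms b) : piab h 0 = 0.
Proof. by apply: dprod_ext. Qed.
Lemma piab1 a b (h : Ms a `<=` Ms b) : piab h 1 = 1.
Proof. by apply: dprod_ext. Qed.

Definition kl_zero := KLim (fun a b h => piab0 h).
Definition kl_one := KLim (fun a b h => piab1 h).
Definition kl_opp (x : Klim) :=
  KLim (fun a b h => etrans (piab_opp h (klval x b)) (f_equal -%R (klP x h))).
Definition kl_add (x y : Klim) :=
  KLim (fun a b h => etrans (piab_add h (klval x b) (klval y b))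
                      (f_equal2 +%R (klP x h) (klP y h))).
Definition kl_mul (x y : Klim) :=
  KLim (fun a b h => etrans (piab_mul h (klval x b) (klval y b))
                      (f_equal2 *%R (klP x h) (klP y h))).

Lemma kl_addA : associative kl_add.
Proof. by move=> x y z; apply: Klim_ext => a /=; rewrite addrA. Qed.
Lemma kl_addC : commutative kl_add.
Proof. by move=> x y; apply: Klim_ext => a /=; rewrite addrC. Qed.
Lemma kl_add0 : left_id kl_zero kl_add.
Proof. by move=> x; apply: Klim_ext => a /=; rewrite add0r. Qed.
Lemma kl_addN : left_inverse kl_zero kl_opp kl_add.
Proof. by move=> x; apply: Klim_ext => a /=; rewrite addNr. Qed.

HB.instance Definition _ :=
  GRing.isZmodule.Build Klim kl_addA kl_addC kl_add0 kl_addN.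

Lemma kl_mulA : associative kl_mul.
Proof. by move=> x y z; apply: Klim_ext => a /=; rewrite mulrA. Qed.
Lemma kl_mulC : commutative kl_mul.
Proof. by move=> x y; apply: Klim_ext => a /=; rewrite mulrC. Qed.
Lemma kl_mul1 : left_id kl_one kl_mul.
Proof. by move=> x; apply: Klim_ext => a /=; rewrite mul1r. Qed.
Lemma kl_mulDl : left_distributive kl_mul (@GRing.add Klim).
Proof. by move=> x y z; apply: Klim_ext => a /=; rewrite mulrDl. Qed.

HB.instance Definition _ :=
  GRing.Zmodule_isComPzRing.Build Klim kl_mulA kl_mulC kl_mul1 kl_mulDl.

Definition piK (a : J) (x : Klim) : Kal a := klval x a.

End Limit.

(* A finitely generated projective R-module is represented as the       *)
(* row space im(e) = { x *m e } of an idempotent e : 'M[R]_n.           *)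

(* im(e) and im(f) are isomorphic R-modules: A : im e -> im f (x |-> x A)
   and B : im f -> im e are mutually inverse homomorphisms. *)
Definition mx_iso (R : comPzRingType) (n p : nat)
    (e : 'M[R]_n) (f : 'M[R]_p) : Prop :=
  exists (A : 'M[R]_(n, p)) (B : 'M[R]_(p, n)),
    [/\ e *m A *m f = A, f *m B *m e = B, A *m B = e & B *m A = f].

(* im(e) is an invertible R-module: e is idempotent and there is a
   f.g. projective module im(g) with im(e) (x) im(g) = im(e *t g) ~= R. *)
Definition invertible_mx (R : comPzRingType) (n : nat) (e : 'M[R]_n) : Prop :=
  e *m e = e /\
  exists (q : nat) (g : 'M[R]_q),
    g *m g = g /\ mx_iso (tensmx e g) (1%:M : 'M[R]_1).

(* base change of im(e) along a ring map phi: im(e) (x)_R S = im(phi e) *)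
Definition base_change (R S : comPzRingType) (phi : R -> S) (n : nat)
    (e : 'M[R]_n) : 'M[S]_n := map_mx phi e.

(* Main.v *)
Require Import Defs.
From HB Require Import structures.
From mathcomp Require Import all_boot all_order all_algebra.
From mathcomp Require Import boolp classical_sets cardinality.
From mathcomp Require Import mxtens.
Set Implicit Arguments. Unset Strict Implicit.
Import GRing.Theory.
Local Open Scope ring_scope.
Local Open Scope classical_set_scope.
Definition unitp (R : comPzRingType) (x : R) := exists t, x * t = 1.
Definition localp (R : comPzRingType) :=
  (1 : R) <> 0 /\ forall x : R, unitp x \/ unitp (1 - x).

Lemma nonunit_add (R : comPzRingType) (hl : localp R) (x y : R) :
  ~ unitp x -> ~ unitp y -> ~ unitp (x + y).
Proof.
move=> nx ny [u hu]; case: hl => _ /(_ (x * u)) [[t ht]|[t ht]].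
  by apply: nx; exists (u * t); rewrite mulrA.
apply: ny; exists (u * t).
have E : y * u = 1 - x * u by rewrite -hu mulrDl addrAC subrr add0r.
by rewrite mulrA E.
Qed.

Lemma sum_unit (R : comPzRingType) (hl : localp R) N (F : 'I_N -> R) :
  \sum_(i < N) F i = 1 -> exists i, unitp (F i).
Proof.
move=> hs; apply: contrapT => hn.
have H : forall (s : seq 'I_N), ~ unitp (\sum_(i <- s) F i).
  elim=> [|i s IH]; first by rewrite big_nil => -[t]; rewrite mul0r => h; case: hl => h1 _; apply: h1.
  rewrite big_cons; apply: nonunit_add => //.
  by move=> hu; apply: hn; exists i.
apply: (H (index_enum 'I_N)); rewrite hs; exists 1; exact: mulr1.
Qed.

Lemma key (R : comPzRingType) (hl : localp R) n q (e : 'M[R]_n) (g : 'M[R]_q)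
  (C : 'M[R]_(n * q, 1)) (D : 'M[R]_(1, n * q)) :
  e *m e = e -> C *m D = tensmx e g -> D *m C = 1%:M ->
  exists (A : 'M[R]_(n, 1)) (B : 'M[R]_(1, n)),
    [/\ e *m A *m 1%:M = A, 1%:M *m B *m e = B, A *m B = e & B *m A = 1%:M].
Proof.
move=> ee hCD hDC.
have htr : \sum_(k < n * q) (tensmx e g) k k = 1.
  have := congr1 (fun M : 'M[R]_1 => M 0 0) hDC.
  rewrite /= !mxE /=; move=> h; apply: etrans h; apply: eq_bigr => k _.
  by rewrite -hCD !mxE big_ord1 mulrC.
have [k [u hu]] := sum_unit hl htr.
case: (mxtens_indexP k) hu => [i0 j0] hu.
rewrite tensmxE in hu.
pose A := \matrix_(i < n, j < 1) C (mxtens_index (i, j0)) 0.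
pose B := \matrix_(i < 1, j < n) (D 0 (mxtens_index (j, j0)) * (e i0 i0 * u)).
have hAB : A *m B = e.
  apply/matrixP => i i'; rewrite !mxE big_ord1 !mxE.
  have := congr1 (fun M : 'M[R]_(n * q) => M (mxtens_index (i, j0)) (mxtens_index (i', j0))) hCD.
  rewrite /= tensmxE mxE big_ord1 => h; rewrite mulrA.
  have -> : C (mxtens_index (i, j0)) 0 * D 0 (mxtens_index (i', j0)) = e i i' * g j0 j0 by exact: h.
  by rewrite -mulrA (mulrA (g j0 j0)) (mulrC (g j0 j0)) hu mulr1.
pose s := (B *m A) 0 0.
have hBA1 : B *m A = s%:M.
  by apply/matrixP => i j; rewrite !ord1 /s !mxE eqxx mulr1n.
have hse : e = s *: e.
  have : (A *m B) *m (A *m B) = s *: (A *m B) by rewrite mulmxA -(mulmxA A) hBA1 mul_mx_scalar scalemxAl.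
  by rewrite hAB ee.
have hs : s = 1.
  have := congr1 (fun M : 'M[R]_n => M i0 i0) hse; rewrite /= mxE => h.
  have : e i0 i0 * (g j0 j0 * u) = s * e i0 i0 * (g j0 j0 * u) by rewrite -h.
  by rewrite !mulrA hu -!mulrA (mulrA (e i0 i0)) hu mulr1 => ->.
have hBA : B *m A = 1%:M by rewrite hBA1 hs.
exists A, B; split => //.
- by rewrite mulmx1 -hAB -mulmxA hBA mulmx1.
- by rewrite mul1mx -hAB mulmxA hBA mul1mx.
Qed.
Section Coord.
Variables (T : Type) (L : T -> comPzRingType) (J : Type) (Ms : J -> set T).
Hypothesis hchain : forall a b, Ms a `<=` Ms b \/ Ms b `<=` Ms a.
Variable sel : forall t, {a : J | Ms a t}.

Definition coord (t : T) (x : Klim L Ms) : L t :=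
  dpval (klval x (proj1_sig (sel t)))
    (exist (fun u => Ms (proj1_sig (sel t)) u) t (proj2_sig (sel t))).

Lemma coord_any t a (h : Ms a t) x :
  coord t x = dpval (klval x a) (exist (fun u => Ms a u) t h).
Proof.
rewrite /coord; case: (sel t) => b hb /=.
case: (hchain a b) => hab.
  rewrite -(klP x hab) /piab /=.
  by have -> : hab t h = hb by exact: Prop_irrelevance.
rewrite -(klP x hab) /piab /=.
by have -> : hab t hb = h by exact: Prop_irrelevance.
Qed.

Lemma coord_ext x y : (forall t, coord t x = coord t y) -> x = y.
Proof.
move=> H; apply: Klim_ext => a; apply: dprod_ext => -[t h].
by rewrite -!coord_any.
Qed.

Definition emb (c : forall t, L t) : Klim L Ms :=
  @KLim _ L _ Ms (fun a => DProd (fun m : {x | Ms a x} => c (proj1_sig m)))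
    (fun a b h => erefl).

Lemma coord_emb c t : coord t (emb c) = c t.
Proof. by []. Qed.

Section T.
Variable t : T.
Lemma coord_zmod : zmod_morphism (coord t).
Proof. by []. Qed.
Lemma coord_mon : monoid_morphism (coord t).
Proof. by []. Qed.
HB.instance Definition _ := GRing.isZmodMorphism.Build _ _ (coord t) coord_zmod.
HB.instance Definition _ := GRing.isMonoidMorphism.Build _ _ (coord t) coord_mon.
End T.

Lemma mx_coord_ext a b (X Y : 'M[Klim L Ms]_(a, b)) :
  (forall t, map_mx (coord t) X = map_mx (coord t) Y) -> X = Y.
Proof.
move=> H; apply/matrixP => i j; apply: coord_ext => t.
by have := congr1 (fun M : 'M[L t]_(a, b) => M i j) (H t); rewrite !mxE.
Qed.

End Coord.
Lemma loc_localp (R S : comPzRingType) (P : set R) (f : {rmorphism R -> S}) :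
  is_ideal P -> is_localization P f -> localp S.
Proof.
move=> [P0 [PD PM]] [h1 h2 h3]; split.
  move=> h10; have : f 1 = 0 by rewrite rmorph1.
  by case/h2 => s hs; rewrite mulr1 => s0; apply: hs; rewrite s0.
move=> x; have [a [s [hs hx]]] := h3 x.
have [t ht] := h1 s hs.
case: (pselect (P a)) => ha.
  right.
  have hsa : ~ P (s - a).
    move=> hsa; apply: hs; have := PD _ _ hsa ha; by rewrite subrK.
  have [t' ht'] := h1 _ hsa.
  exists (f s * t'); rewrite mulrA mulrBl mul1r hx -rmorphB; exact: ht'.
left; have [t' ht'] := h1 a ha.
by exists (f s * t'); rewrite mulrA hx.
Qed.

Lemma iso1 (T : Type) (L : T -> comPzRingType) (J : Type) (Ms : J -> set T)
  (hchain : forall a b, Ms a `<=` Ms b \/ Ms b `<=` Ms a)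
  (sel : forall t, {a : J | Ms a t}) (hl : forall t, localp (L t))
  n (e : 'M[Klim L Ms]_n) :
  invertible_mx e -> mx_iso e (1%:M : 'M[Klim L Ms]_1).
Proof.
case=> ee [q [g [gg [C [D [h1 h2 h3 h4]]]]]].
have H : forall t, exists AB : 'M[L t]_(n, 1) * 'M[L t]_(1, n),
  let e' := map_mx (coord sel t) e in
  [/\ e' *m AB.1 *m 1%:M = AB.1, 1%:M *m AB.2 *m e' = AB.2,
      AB.1 *m AB.2 = e' & AB.2 *m AB.1 = 1%:M].
  move=> t.
  have E1 : map_mx (coord sel t) e *m map_mx (coord sel t) e = map_mx (coord sel t) e
    by rewrite -map_mxM ee.
  have E2 : map_mx (coord sel t) C *m map_mx (coord sel t) D
            = tensmx (map_mx (coord sel t) e) (map_mx (coord sel t) g)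
    by rewrite -map_mxM h3 map_mxT.
  have E3 : map_mx (coord sel t) D *m map_mx (coord sel t) C = 1%:M
    by rewrite -map_mxM h4 map_mx1.
  have [A [B hAB]] := key (hl t) E1 E2 E3.
  by exists (A, B).
pose ABf t := proj1_sig (cid (H t)).
have hABf t := proj2_sig (cid (H t)).
pose A := \matrix_(i < n, j < 1) @emb _ L _ Ms (fun t => (ABf t).1 i j).
pose B := \matrix_(i < 1, j < n) @emb _ L _ Ms (fun t => (ABf t).2 i j).
have mA t : map_mx (coord sel t) A = (ABf t).1 by apply/matrixP => i j; rewrite !mxE.
have mB t : map_mx (coord sel t) B = (ABf t).2 by apply/matrixP => i j; rewrite !mxE.
exists A, B; split; apply: (@mx_coord_ext _ L _ Ms hchain sel) => t;
  rewrite ?map_mxM ?map_mx1 ?mA ?mB; case: (hABf t) => //.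
Qed.

Lemma iso_comb (R : comPzRingType) n p (e : 'M[R]_n) (f : 'M[R]_p) :
  mx_iso e (1%:M : 'M[R]_1) -> mx_iso f (1%:M : 'M[R]_1) -> mx_iso e f.
Proof.
move=> [Ae [Be [e1 e2 e3 e4]]] [Af [Bf [f1 f2 f3 f4]]].
rewrite mulmx1 in e1; rewrite mulmx1 in f1; rewrite mul1mx in e2; rewrite mul1mx in f2.
have eA : e *m Ae = Ae by []. 
exists (Ae *m Bf), (Af *m Be); split.
- by rewrite mulmxA e1 -mulmxA f2.
- by rewrite mulmxA f1 -mulmxA e2.
- by rewrite mulmxA -(mulmxA Ae) f4 mulmx1.
- by rewrite mulmxA -(mulmxA Af) e4 mulmx1.
Qed.

Unset Implicit Arguments.
Theorem theorem8p3
  (k : comPzRingType)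
  (L : maxideal k -> comPzRingType)
  (phi : forall m : maxideal k, {rmorphism k -> L m})
  (hloc : forall m : maxideal k, is_localization (proj1_sig m) (phi m))
  (I : Type) (Ms : I -> set (maxideal k))
  (hfin : forall a, finite_set (Ms a))
  (hchain : forall a b, Ms a `<=` Ms b \/ Ms b `<=` Ms a)
  (hcover : forall m : maxideal k, exists a, Ms a m)
  (n p : nat) (e : 'M[Klim L Ms]_n) (f : 'M[Klim L Ms]_p) :
  invertible_mx e -> invertible_mx f ->
  (forall a : I, mx_iso (base_change (piK a) e) (base_change (piK a) f)) ->
  mx_iso e f.
Proof.
move=> he hf _.
pose sel m := cid (hcover m).
have hl m : localp (L m).
  case: (proj2_sig m) => hI _ _; exact: (@loc_localp _ _ _ _ hI (hloc m)).
apply: iso_comb; exact: (iso1 hchain sel hl).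
Qed.
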